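(* Let $\mathcal{V}$ be a linear subspace of $\mathrm{A}_n(\mathbb{K})$. Let $C\subseteq\mathbb{K}^n$ be a linear hyperplane of $\mathbb{K}^n$ if $\#\mathbb{K}=2$, or a union $H_1\cup H_2$ of two linear hyperplanes of $\mathbb{K}^n$ otherwise. Assume that $E:=\{x\in\mathbb{K}^n:\dim\mathcal{V}x=n-1\}$ is included in $C$, where $\mathcal{V}x:=\{Mx\mid M\in\mathcal{V}\}$. Then $\dim\mathcal{V}\leq\binom{n-1}{2}$.
   Context: $\mathrm{A}_n(\mathbb{K})$ denotes the space of alternating $n\times n$ matrices over the field $\mathbb{K}$ (skew-symmetric with zero diagonal). *)

(* Defs.v *)
From HB Require Import structures.
From mathcomp Require Import all_boot all_order all_algebra.
Set Implicit Arguments. Unset Strict Implicit. Unset Printing Implicit Defensive.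
Import GRing.Theory.
Local Open Scope ring_scope.

Definition alternating (K : fieldType) (n : nat) (A : 'M[K]_n) : Prop :=
  A^T = - A /\ (forall i, A i i = 0).

Definition Vx (K : fieldType) (n : nat) (V : {vspace 'M[K]_n}) (x : 'cV[K]_n)
  : {vspace 'cV[K]_n} := (linfun (mulmxr x) @: V)%VS.

Definition hyperplane (K : fieldType) (n : nat) (H : {vspace 'cV[K]_n}) : Prop :=
  (\dim H).+1 = n.

Definition card_is_2 (K : fieldType) : Prop := forall x : K, x = 0 \/ x = 1.

(* Main.v *)
From HB Require Import structures.
From mathcomp Require Import all_boot all_order all_algebra.
From mathcomp Require Import zify.
From Stdlib Require Import Classical.
Require Import Defs.
Set Implicit Arguments. Unset Strict Implicit. Unset Printing Implicit Defensive.
Import GRing.Theory.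
Local Open Scope ring_scope.

Section S.
Variable K : fieldType.

Lemma tr11 (A : 'M[K]_1) : A^T = A.
Proof. by apply/matrixP=> i j; rewrite mxE !ord1. Qed.

Lemma alt_entry n (N : 'M[K]_n) : alternating N -> forall i j, N j i = - N i j.
Proof. by case=> h _ i j; move: (congr1 (fun A : 'M[K]_n => A i j) h); rewrite !mxE. Qed.

Lemma quad0 n (N : 'M[K]_n) (x : 'cV[K]_n) : alternating N -> x^T *m N *m x = 0.
Proof.
move=> hN; have [_ hd] := hN.
pose U := \matrix_(i, j) (if (i < j)%N then N i j else 0) : 'M[K]_n.
have eN : N = U - U^T.
  apply/matrixP=> i j; rewrite !mxE.
  case: (ltngtP i j) => h.
  - by rewrite subr0.
  - by rewrite sub0r (alt_entry hN i j) opprK.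
  - have -> : i = j by apply: val_inj.
    by rewrite hd subr0.
rewrite eN mulmxBr mulmxBl.
have -> : x^T *m U^T *m x = (x^T *m U *m x)^T by rewrite !trmx_mul trmxK mulmxA.
by rewrite tr11 subrr.
Qed.

Lemma exists_nz n (z : 'cV[K]_n) : z != 0 -> exists i, z i 0 != 0.
Proof.
move=> nz; case: (pickP (fun i => z i 0 != 0)) => [i hi|h]; first by exists i.
case/eqP: nz; apply/matrixP=> i j; rewrite ord1 mxE.
by move: (h i) => /negbFE/eqP.
Qed.

Lemma dimVx_le n (V : {vspace 'M[K]_n}) z :
  (forall M, M \in V -> alternating M) -> (\dim (Vx V z) <= n.-1)%N.
Proof.
move=> alt.
have [->|nz] := eqVneq z 0.
  have : (Vx V 0 <= 0)%VS.
    apply/subvP=> w /memv_imgP [M _ ->]; by rewrite lfunE /= mulmx0 memv0.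
  by move/dimvS; rewrite dimv0 leqn0 => /eqP ->.
pose f := linfun (mulmx z^T) : 'Hom('cV[K]_n, 'M[K]_1).
have sub : (Vx V z <= lker f)%VS.
  apply/subvP=> w /memv_imgP [M MV ->].
  by rewrite memv_ker !lfunE /= mulmxA quad0 ?eqxx //; apply: alt.
have := limg_ker_dim f fullv; rewrite capfv dimvf dim_matrix.
have [i hi] := exists_nz nz.
have : (f @: fullv)%VS != 0%VS.
  apply/negP=> /eqP h0.
  have : f (delta_mx i 0) \in (f @: fullv)%VS by apply: memv_img; apply: memvf.
  rewrite h0 memv0 lfunE /= -colE => /eqP/matrixP/(_ 0 0).
  by rewrite !mxE => e; move: hi; rewrite e eqxx.
rewrite -dimv_eq0 => d1 e; have d2 : (0 < \dim (f @: fullv))%N by rewrite lt0n.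
rewrite mulr1 in e; have h : (\dim (Vx V z) + \dim (limg f) <= n)%N by rewrite -[X in (_ <= X)%N]e leq_add2r; exact: dimvS.
move: h d2; generalize (\dim (limg f)) (\dim (Vx V z)); lia.
Qed.

Definition e0 m : 'cV[K]_m.+1 := delta_mx ord0 ord0.
Definition subm m (M : 'M[K]_m.+1) : 'M[K]_m :=
  \matrix_(i, j) M (lift ord0 i) (lift ord0 j).
Fact subm_linear m : linear (@subm m).
Proof. by move=> a A B; apply/matrixP=> i j; rewrite !mxE. Qed.
HB.instance Definition _ m := GRing.isLinear.Build K _ _ _ (@subm m) (@subm_linear m).

Definition liftv m (y : 'cV[K]_m) : 'cV[K]_m.+1 :=
  \col_i (if unlift ord0 i is Some j then y j 0 else 0).
Fact liftv_linear m : linear (@liftv m).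
Proof.
move=> a A B; apply/matrixP=> i j; rewrite !mxE.
by case: (unlift ord0 i) => [k|]; rewrite ?mxE // mulr0 addr0.
Qed.
HB.instance Definition _ m := GRing.isLinear.Build K _ _ _ (@liftv m) (@liftv_linear m).

Lemma liftv0 m (y : 'cV[K]_m) : liftv y ord0 0 = 0.
Proof. by rewrite mxE unlift_none. Qed.
Lemma liftvS m (y : 'cV[K]_m) j : liftv y (lift ord0 j) 0 = y j 0.
Proof. by rewrite mxE liftK. Qed.

Lemma mule0 m (M : 'M[K]_m.+1) i : (M *m e0 m) i 0 = M i ord0.
Proof. by rewrite -colE mxE. Qed.

Definition altV n (V : {vspace 'M[K]_n}) := forall M, M \in V -> alternating M.

Lemma mul_liftv m (M : 'M[K]_m.+1) (y : 'cV[K]_m) i :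
  (M *m liftv y) i 0 = \sum_j M i (lift ord0 j) * y j 0.
Proof.
rewrite mxE big_ord_recl liftv0 mulr0 add0r.
by apply: eq_bigr => j _; rewrite liftvS.
Qed.

Lemma mul_liftv_ker m (M : 'M[K]_m.+1) (y : 'cV[K]_m) :
  alternating M -> M *m e0 m = 0 -> M *m liftv y = liftv (subm M *m y).
Proof.
move=> aM h0; apply/matrixP=> i j; rewrite ord1 mul_liftv.
case: (unliftP ord0 i) => [i'|] ->.
  by rewrite liftvS mxE; apply: eq_bigr => k _; rewrite mxE.
rewrite liftv0; apply: big1 => k _.
rewrite (alt_entry aM) -mule0 h0 mxE oppr0 mul0r //.
Qed.

Lemma subm_inj m (M : 'M[K]_m.+1) :
  alternating M -> M *m e0 m = 0 -> subm M = 0 -> M = 0.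
Proof.
move=> aM h0 hs; apply/matrixP=> i j; rewrite mxE.
case: (unliftP ord0 j) => [j'|] ->; last by rewrite -mule0 h0 mxE.
case: (unliftP ord0 i) => [i'|] ->.
  by move/matrixP: hs => /(_ i' j'); rewrite !mxE.
by rewrite (alt_entry aM) -mule0 h0 mxE oppr0.
Qed.

Lemma subm_alt m (M : 'M[K]_m.+1) : alternating M -> alternating (subm M).
Proof.
move=> aM; split; last by move=> i; rewrite mxE; case: aM => _ ->.
by apply/matrixP=> i j; rewrite !mxE (alt_entry aM).
Qed.

Definition Vsub m (V : {vspace 'M[K]_m.+1}) : {vspace 'M[K]_m} :=
  (linfun (@subm m) @: (V :&: lker (linfun (mulmxr (e0 m)))))%VS.

Lemma Vsub_alt m (V : {vspace 'M[K]_m.+1}) : altV V -> altV (Vsub V).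
Proof.
move=> aV M /memv_imgP [N]; rewrite memv_cap => /andP [NV _] ->.
by rewrite lfunE /=; apply: subm_alt; apply: aV.
Qed.

Lemma decomp m (V : {vspace 'M[K]_m.+1}) : altV V ->
  \dim V = (\dim (Vx V (e0 m)) + \dim (Vsub V))%N.
Proof.
move=> aV; rewrite /Vsub [\dim (linfun (@subm m) @: _)]limg_dim_eq.
  by rewrite -{1}(limg_ker_dim (linfun (mulmxr (e0 m))) V) addnC.
apply/eqP; rewrite -subv0; apply/subvP=> M.
rewrite !memv_cap !memv_ker !lfunE /= memv0 => /andP [/andP [MV h0] hs].
by apply/eqP; apply: subm_inj; [apply: aV | apply/eqP | apply/eqP].
Qed.

Lemma alt_dim n (V : {vspace 'M[K]_n}) : altV V -> (\dim V <= 'C(n, 2))%N.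
Proof.
elim: n V => [|m IH] V aV.
  by have := dimvS (subvf V); rewrite dimvf dim_matrix.
rewrite decomp // binS bin1 [X in (_ <= X)%N]addnC.
apply: leq_add; first exact: (dimVx_le (e0 m) aV).
by apply: IH; apply: Vsub_alt.
Qed.

Lemma line_once n (H : {vspace 'cV[K]_n}) (e w : 'cV[K]_n) t1 t2 :
  e \notin H -> t1 *: e + w \in H -> t2 *: e + w \in H -> t1 = t2.
Proof.
move=> eH h1 h2; apply/eqP; rewrite -subr_eq0; apply/negPn/negP => nz.
have : (t1 - t2)^-1 *: ((t1 *: e + w) - (t2 *: e + w)) \in H.
  by apply: memvZ; apply: memvB.
rewrite opprD addrACA subrr addr0 -scalerBl scalerA mulVf // scale1r.
by apply/negP.
Qed.

Lemma choose_t n (H1 H2 : {vspace 'cV[K]_n}) (e w : 'cV[K]_n) :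
  (H1 = H2 \/ ~ card_is_2 K) -> e \notin H1 -> e \notin H2 ->
  exists t, t *: e + w \notin H1 /\ t *: e + w \notin H2.
Proof.
move=> hc e1 e2.
have u1 := line_once e1; have u2 := line_once e2.
have o1 : (0 : K) <> 1 by move/eqP; rewrite eq_sym oner_eq0.
case: hc => [<-|nc].
  case h0: (0 *: e + w \in H1); last by exists 0; rewrite h0.
  exists 1; case h1: (1 *: e + w \in H1) => //.
  by have := u1 _ _ _ h0 h1.
have [c hc] : exists c : K, ~ (c = 0 \/ c = 1).
  by apply: not_all_ex_not.
have c0 : 0 <> c by move=> h; apply: hc; left.
have c1 : 1 <> c by move=> h; apply: hc; right.
case h01: (0 *: e + w \in H1); case h02: (0 *: e + w \in H2);
  try (by exists 0; rewrite h01 h02);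
case h11: (1 *: e + w \in H1); case h12: (1 *: e + w \in H2);
  try (by exists 1; rewrite h11 h12);
case hc1: (c *: e + w \in H1); case hc2: (c *: e + w \in H2);
  try (by exists c; rewrite hc1 hc2);
first [ by have := u1 _ _ _ h01 h11 | by have := u2 _ _ _ h02 h12
      | by have := u1 _ _ _ h01 hc1 | by have := u2 _ _ _ h02 hc2
      | by have := u1 _ _ _ h11 hc1 | by have := u2 _ _ _ h12 hc2 ].
Qed.

Definition Qprop n := forall V : {vspace 'M[K]_n}, altV V ->
  ('C(n.-1, 2) < \dim V)%N ->
  forall H1 H2 : {vspace 'cV[K]_n}, (\dim H1 < n)%N -> (\dim H2 < n)%N ->
  (H1 = H2 \/ ~ card_is_2 K) ->
  exists z, z \notin H1 /\ z \notin H2 /\ \dim (Vx V z) = n.-1.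

Lemma binm m : (0 < m)%N -> 'C(m, 2) = ('C(m.-1, 2) + m.-1)%N.
Proof. by case: m => // m _; rewrite binS bin1. Qed.

Lemma step m : Qprop m -> forall V : {vspace 'M[K]_m.+1}, altV V ->
  ('C(m, 2) < \dim V)%N ->
  forall H1 H2 : {vspace 'cV[K]_m.+1}, (H1 = H2 \/ ~ card_is_2 K) ->
  e0 m \notin H1 -> e0 m \notin H2 ->
  exists z, z \notin H1 /\ z \notin H2 /\ \dim (Vx V z) = m.
Proof.
move=> IH V aV hV H1 H2 hc e1 e2.
have hle := dimVx_le (e0 m) aV.
have [hd|hd] := eqVneq (\dim (Vx V (e0 m))) m; first by exists (e0 m).
have hdec := decomp aV.
have hA := alt_dim (Vsub_alt aV).
have hnz : \dim (Vx V (e0 m)) != 0%N.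
  by apply/negP => /eqP h0; move: hdec hA hV; rewrite h0; lia.
have m0 : (0 < m)%N by move: hle hnz; simpl; lia.
have /subvPn [u uV] : ~~ (Vx V (e0 m) <= 0)%VS by rewrite subv0 -dimv_eq0.
rewrite memv0 => unz.
case/memv_imgP: uV => M0 M0V eu; rewrite eu lfunE /= in unz.
have aM0 := aV _ M0V.
have [i hi] := exists_nz unz; rewrite mule0 in hi.
case: (unliftP ord0 i) => [k|] ei; rewrite ei in hi; last first.
  by case: aM0 => _ h; rewrite h eqxx in hi.
have hk : M0 ord0 (lift ord0 k) != 0 by rewrite (alt_entry aM0 (lift ord0 k)) oppr_eq0.
pose b0 := \row_j M0 ord0 (lift ord0 j) : 'rV[K]_m.
pose P := lker (linfun (mulmx b0)) : {vspace 'cV[K]_m}.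
have Pk : delta_mx k 0 \notin P.
  rewrite memv_ker lfunE /= -colE; apply/negP => /eqP /matrixP /(_ 0 0).
  by rewrite !mxE => h; rewrite h eqxx in hk.
have dP : (\dim P < m)%N.
  rewrite ltnNge; apply/negP => h.
  have /eqP PF : P == fullv by rewrite eqEdim subvf dimvf dim_matrix mulr1 h.
  by move: Pk; rewrite PF memvf.
have hsub : ('C(m.-1, 2) < \dim (Vsub V))%N.
  by move: hV hle hd; rewrite hdec binm //; lia.
have [y [yP [_ hy]]] := IH (Vsub V) (Vsub_alt aV) hsub P P dP dP (or_introl erefl).
have [t [t1 t2]] := choose_t (liftv y) hc e1 e2.
exists (t *: e0 m + liftv y); split; first by []; split; first by [].
apply/eqP; rewrite eqn_leq dimVx_le //=.
set z := t *: e0 m + liftv y.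
pose S1 := (linfun (@liftv m) @: Vx (Vsub V) y)%VS.
have topz : (M0 *m z) ord0 0 = (b0 *m y) 0 0.
  rewrite mulmxDr -scalemxAr [LHS]mxE [X in X + _]mxE mule0 mul_liftv.
  case: aM0 => _ ->; rewrite mulr0 add0r mxE.
  by apply: eq_bigr => j _; rewrite mxE.
have yb : (b0 *m y) 0 0 != 0.
  move: yP; rewrite memv_ker lfunE /=; apply: contra => h.
  by apply/eqP/matrixP => i0 j0; rewrite !ord1 (eqP h) mxE.
have Mz0 : M0 *m z != 0 by apply/eqP => h; move: yb; rewrite -topz h mxE eqxx.
have sub1 : (S1 + <[M0 *m z]> <= Vx V z)%VS.
  rewrite subv_add -memvE.
  have := memv_img (linfun (mulmxr z)) M0V; rewrite lfunE /= => ->; rewrite andbT.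
  apply/subvP => v /memv_imgP [w /memv_imgP [D /memv_imgP [N]]].
  rewrite memv_cap memv_ker lfunE /= => /andP [NV /eqP N0] -> -> ->.
  rewrite !lfunE /= -(mul_liftv_ker _ (aV _ NV) N0).
  have -> : N *m liftv y = N *m z by rewrite /z mulmxDr -scalemxAr N0 scaler0 add0r.
  by have := memv_img (linfun (mulmxr z)) NV; rewrite lfunE.
have cap0 : (S1 :&: <[M0 *m z]> = 0)%VS.
  apply/eqP; rewrite -subv0; apply/subvP => v0; rewrite memv_cap memv0.
  case/andP => /memv_imgP [w1 _ ev] /vlineP [a ea].
  have := congr1 (fun A : 'cV_m.+1 => A ord0 0) ev.
  rewrite lfunE /= liftv0 ea mxE topz => /eqP; rewrite mulf_eq0 (negbTE yb) orbF.
  by move/eqP => ->; rewrite scale0r.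
have dS1 : \dim S1 = m.-1.
  rewrite limg_dim_eq ?hy //.
  apply/eqP; rewrite -subv0; apply/subvP=> w2; rewrite memv_cap memv_ker lfunE memv0.
  case/andP => _ /eqP h; apply/eqP/matrixP => i0 j0; rewrite ord1.
  by move/matrixP: h => /(_ (lift ord0 i0) 0); rewrite liftvS !mxE.
have := dimvS sub1; rewrite dimv_disjoint_sum // dS1 dim_vline Mz0.
by rewrite /= addn1 prednK.
Qed.

Definition conjm n (P : 'M[K]_n) (M : 'M[K]_n) : 'M[K]_n := P^T *m M *m P.
Fact conjm_linear n (P : 'M[K]_n) : linear (conjm P).
Proof. by move=> a A B; rewrite /conjm mulmxDr mulmxDl -scalemxAr -scalemxAl. Qed.
HB.instance Definition _ n P := GRing.isLinear.Build K _ _ _ (@conjm n P) (conjm_linear P).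

Lemma conjm_alt n (P N : 'M[K]_n) : alternating N -> alternating (conjm P N).
Proof.
move=> aN; have [tN _] := aN; split.
  by rewrite /conjm !trmx_mul trmxK tN mulNmx mulmxN mulmxA.
move=> i.
have -> : conjm P N i i = (row i (col i (conjm P N))) 0 0 by rewrite !mxE.
rewrite rowE colE /conjm -!mulmxA mulmxA.
have -> : delta_mx 0 i *m P^T = (P *m delta_mx i 0)^T :> 'rV[K]_n by rewrite trmx_mul trmx_delta.
by rewrite mulmxA quad0 // mxE.
Qed.

Lemma injdim m1 n1 (A : 'M[K]_m1) (U : {vspace 'M[K]_(m1, n1)}) :
  A \in unitmx -> \dim (linfun (mulmx A) @: U) = \dim U.
Proof.
move=> uA; rewrite limg_dim_eq //; apply/eqP; rewrite -subv0; apply/subvP=> v.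
rewrite memv_cap memv_ker lfunE memv0 /= => /andP [_ /eqP h].
by rewrite -(mulKmx uA v) h mulmx0.
Qed.

Lemma conj_dim n (P : 'M[K]_n) (V : {vspace 'M[K]_n}) :
  P \in unitmx -> \dim (linfun (conjm P) @: V) = \dim V.
Proof.
move=> uP; rewrite limg_dim_eq //; apply/eqP; rewrite -subv0; apply/subvP=> v.
rewrite memv_cap memv_ker lfunE memv0 /= => /andP [_ /eqP h].
have uPt : P^T \in unitmx by rewrite unitmx_tr.
by rewrite -(mulKmx uPt v) -(mulmxK uP (P^T *m v)) -/(conjm P v) h mul0mx mulmx0.
Qed.

Lemma conj_Vx n (P : 'M[K]_n) (V : {vspace 'M[K]_n}) y :
  P \in unitmx -> \dim (Vx (linfun (conjm P) @: V) y) = \dim (Vx V (P *m y)).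
Proof.
move=> uP.
have uPt : P^T \in unitmx by rewrite unitmx_tr.
rewrite -(injdim (Vx V (P *m y)) uPt) /Vx -!limg_comp; congr (\dim (_ @: V)%VS).
by apply/lfunP => M; rewrite !comp_lfunE !lfunE /= /conjm !mulmxA.
Qed.

Lemma mem_inv n (P : 'M[K]_n) (H : {vspace 'cV[K]_n}) z :
  P \in unitmx -> (z \in (linfun (mulmx (invmx P)) @: H)%VS) = (P *m z \in H).
Proof.
move=> uP; apply/idP/idP.
  by case/memv_imgP => h hH ->; rewrite lfunE /= mulKVmx.
move=> hz; have := memv_img (linfun (mulmx (invmx P))) hz.
by rewrite lfunE /= mulKmx.
Qed.

Lemma exists_out n (H1 H2 : {vspace 'cV[K]_n}) :
  (\dim H1 < n)%N -> (\dim H2 < n)%N -> exists x, x \notin H1 /\ x \notin H2.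
Proof.
have outH (H : {vspace 'cV[K]_n}) : (\dim H < n)%N -> exists x, x \notin H.
  move=> dH; have : ~~ (fullv <= H)%VS.
    apply/negP => /dimvS; rewrite dimvf dim_matrix mulr1; lia.
  by case/subvPn => x _ hx; exists x.
move=> /outH [x1 h1] /outH [x2 h2].
case e12: (x1 \in H2); last by exists x1; rewrite e12.
case e21: (x2 \in H1); last by exists x2; rewrite e21.
exists (x1 + x2); split.
  by apply/negP => h; move: h1; rewrite -(rpredDr _ e21) h.
by apply/negP => h; move: h2; rewrite -(rpredDl _ e12) h.
Qed.

Lemma pid_e0 m : (pid_mx 1 : 'M[K]_(1, m.+1))^T = e0 m.
Proof.
apply/matrixP => i j; rewrite !mxE !ord1 /=.
by case: i => [[|i] hi].
Qed.

Lemma basis_e0 m (x : 'cV[K]_m.+1) : x != 0 ->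
  exists P : 'M[K]_m.+1, exists c : K, P \in unitmx /\ P *m (c *: e0 m) = x.
Proof.
move=> nx; pose A := x^T.
have rA : \rank A = 1%N.
  apply/eqP; rewrite eqn_leq rank_leq_row lt0n mxrank_eq0.
  by apply: contra nx => /eqP h; rewrite -[x]trmxK -/A h trmx0.
have hx := mulmx_ebase A; rewrite rA in hx.
exists (row_ebase A)^T, (col_ebase A 0 0); split; first by rewrite unitmx_tr row_ebase_unit.
have hx' : x = (row_ebase A)^T *m (e0 m *m col_ebase A).
  by rewrite -pid_e0 -[col_ebase A]tr11 -!trmx_mul hx trmxK.
by rewrite [RHS]hx' {2}[col_ebase A]mx11_scalar mul_mx_scalar.
Qed.

Lemma Qall n : Qprop n.
Proof.
elim: n => [|m IH] V aV hV H1 H2 d1 d2 hc.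
  by have := alt_dim aV; move: hV; rewrite /=; lia.
have [x [x1 x2]] := exists_out d1 d2.
have nx : x != 0 by apply: contraNneq x1 => ->; apply: mem0v.
have [P [c [uP ex]]] := basis_e0 nx.
pose W := (linfun (conjm P) @: V)%VS.
pose G1 := (linfun (mulmx (invmx P)) @: H1)%VS.
pose G2 := (linfun (mulmx (invmx P)) @: H2)%VS.
have aW : altV W.
  by move=> M /memv_imgP [N NV ->]; rewrite lfunE; apply: conjm_alt; apply: aV.
have uPi : invmx P \in unitmx by rewrite unitmx_inv.
have hc' : G1 = G2 \/ ~ card_is_2 K.
  by case: hc => [e|h]; [left; rewrite /G1 /G2 e | right].
have eG (H : {vspace 'cV[K]_m.+1}) : x \notin H -> e0 m \notin (linfun (mulmx (invmx P)) @: H)%VS.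
  move=> xH; rewrite mem_inv //; apply: contra xH => h.
  by rewrite -ex -scalemxAr; apply: memvZ.
have hW : ('C(m, 2) < \dim W)%N by rewrite conj_dim.
have [z [z1 [z2 hz]]] := step IH aW hW hc' (eG _ x1) (eG _ x2).
exists (P *m z); rewrite -!mem_inv //; split; first by []; split; first by [].
by rewrite -conj_Vx.
Qed.
End S.

Theorem mainTheorem18 (K : fieldType) (n : nat) (V : {vspace 'M[K]_n})
    (C : 'cV[K]_n -> Prop) :
  (forall M, M \in V -> alternating M) ->
  (card_is_2 K ->
     exists H : {vspace 'cV[K]_n}, hyperplane H /\ (forall x, C x <-> x \in H)) ->
  (~ card_is_2 K ->
     exists H1 H2 : {vspace 'cV[K]_n}, hyperplane H1 /\ hyperplane H2 /\
       (forall x, C x <-> (x \in H1 \/ x \in H2))) ->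
  (forall x : 'cV[K]_n, \dim (Vx V x) = n.-1 -> C x) ->
  (\dim V <= 'C(n.-1, 2))%N.
Proof.
move=> aV h2 h3 hE; rewrite leqNgt; apply/negP => hV.
case: (classic (card_is_2 K)) => c.
  have [H [hH hC]] := h2 c.
  have dH : (\dim H < n)%N by move: hH; rewrite /hyperplane; lia.
  have [z [z1 [_ hz]]] := Qall aV hV dH dH (or_introl erefl).
  by move/negP: z1; apply; apply/hC; apply: hE.
have [H1 [H2 [hH1 [hH2 hC]]]] := h3 c.
have dH1 : (\dim H1 < n)%N by move: hH1; rewrite /hyperplane; lia.
have dH2 : (\dim H2 < n)%N by move: hH2; rewrite /hyperplane; lia.
have [z [z1 [z2 hz]]] := Qall aV hV dH1 dH2 (or_intror c).
by case: (proj1 (hC z) (hE z hz)); apply/negP.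
Qed.
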